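(* Assume (CVX), (SM), (QSM) and (SCO). Let $L_{\max}=\max\{L_1,\dots,L_n\}$, $\kappa=\ell/\mu$, and let $\tau\ge 1$, $R\ge 1$ be integers. Let the constant step-size satisfy $0<\gamma_k\equiv\gamma\le \frac{1}{\ell\tau+2(\tau-1)L_{\max}\sqrt{\kappa}}$. Then the iterates of deterministic (full-batch) PEARL-SGD satisfy $$\|\mathbf{x}_{\tau R}-\mathbf{x}_\star\|^2\le (1-\gamma\tau\mu\zeta)^R\,\|\mathbf{x}_0-\mathbf{x}_\star\|^2,$$ where $\zeta=2-\gamma\ell\tau-2(\tau-1)\gamma L_{\max}\sqrt{\kappa/3}$, which is positive under the stated step-size condition.
   Context: Setup. Let $n\ge1$, $d_1,\dots,d_n\ge1$, $D=d_1+\dots+d_n$. A joint action is $\mathbf{x}=(x^1,\dots,x^n)\in\mathbb{R}^D$ with $x^i\in\mathbb{R}^{d_i}$; $x^{-i}\in\mathbb{R}^{D-d_i}$ denotes all blocks except the $i$-th, and $f_i(x^i;x^{-i})=f_i(x^1,\dots,x^n)$. For each $i$, $f_i:\mathbb{R}^D\to\mathbb{R}$ is differentiable in $x^i$, and $\nabla f_i(x^i;x^{-i})$ denotes the gradient of $f_i$ with respect to $x^i$ only. The joint gradient operator is $\mathbb{F}(\mathbf{x})=(\nabla f_1(x^1;x^{-1}),\dots,\nabla f_n(x^n;x^{-n}))\in\mathbb{R}^D$. Assumptions. (CVX): for each $i$ and each $x^{-i}$, $f_i(\cdot;x^{-i})$ is convex on $\mathbb{R}^{d_i}$. (SM): for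 each $i$ there is $L_i>0$ with $\|\nabla f_i(x^i;x^{-i})-\nabla f_i(y^i;x^{-i})\|\le L_i\|x^i-y^i\|$ for all $x^i,y^i,x^{-i}$. (QSM): there is a unique $\mathbf{x}_\star$ with $\mathbb{F}(\mathbf{x}_\star)=0$, and $\mu>0$ with $\langle\mathbb{F}(\mathbf{x}),\mathbf{x}-\mathbf{x}_\star\rangle\ge\mu\|\mathbf{x}-\mathbf{x}_\star\|^2$ for all $\mathbf{x}$. (SCO): there is $\ell>0$ with $\langle\mathbb{F}(\mathbf{x}),\mathbf{x}-\mathbf{x}_\star\rangle\ge\frac1\ell\|\mathbb{F}(\mathbf{x})\|^2$ for all $\mathbf{x}$. Deterministic PEARL-SGD: given $\mathbf{x}_0\in\mathbb{R}^D$, synchronization interval $\tau\ge1$, number of rounds $R\ge1$, step-sizes $\gamma_k>0$: for each round $p=0,\dots,R-1$, each player $i$ and each $k=\tau p,\dots,\tau(p+1)-1$, set $x^i_{k+1}=x^i_k-\gamma_k\nabla f_i(x^i_k;x^{-i}_{\tau p})$ (the other players' blocks are frozen at their values at the last synchronization time $\tau p$). Write $\mathbf{x}_k=(x^1_k,\dots,x^n_k)$; the output is $\mathbf{x}_{\tau R}$. *)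

(* Defs.v *)
From HB Require Import structures.
From mathcomp Require Import all_boot all_order all_algebra.
From mathcomp Require Import all_classical all_reals all_analysis.
Set Implicit Arguments. Unset Strict Implicit. Unset Printing Implicit Defensive.
Import Order.TTheory GRing.Theory Num.Theory.
Import numFieldNormedType.Exports.
Local Open Scope ring_scope.

Definition joint (R : realType) (n : nat) (d : 'I_n -> nat) :=
  forall i : 'I_n, 'rV[R]_(d i).

Section Defs.
Variables (R : realType) (n : nat) (d : 'I_n -> nat).
Local Notation J := (joint R d).

Definition vdot k (u v : 'rV[R]_k) : R := \sum_(j < k) u 0 j * v 0 j.
Definition vnorm k (u : 'rV[R]_k) : R := Num.sqrt (vdot u u).
Definition jdot (x y : J) : R := \sum_(i < n) vdot (x i) (y i).
Definition jnorm2 (x : J) : R := jdot x x.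
Definition jsub (x y : J) : J := fun i => x i - y i.

(* replace the i-th block of x by y : f_i(y ; x^{-i}) = f i (upd x y) *)
Definition upd (x : J) (i : 'I_n) (y : 'rV[R]_(d i)) : J := @dfwith _ (fun j : 'I_n => 'rV[R]_(d j)) x i y.

Definition is_partial_grad (f : 'I_n -> J -> R)
  (G : forall i : 'I_n, J -> 'rV[R]_(d i)) : Prop :=
  forall (i : 'I_n) (x : J),
    differentiable (fun y : 'rV[R]_(d i) => f i (upd x y)) (x i) /\
    forall v : 'rV[R]_(d i),
      'd (fun y : 'rV[R]_(d i) => f i (upd x y)) (x i) v = vdot (G i x) v.

Definition CVX (f : 'I_n -> J -> R) : Prop :=
  forall (i : 'I_n) (x : J) (y z : 'rV[R]_(d i)) (t : R), 0 <= t -> t <= 1 ->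
    f i (upd x (t *: y + (1 - t) *: z)) <= t * f i (upd x y) + (1 - t) * f i (upd x z).

Definition SM (G : forall i : 'I_n, J -> 'rV[R]_(d i)) (L : 'I_n -> R) : Prop :=
  forall i : 'I_n, 0 < L i /\
    forall (x : J) (y z : 'rV[R]_(d i)),
      vnorm (G i (upd x y) - G i (upd x z)) <= L i * vnorm (y - z).

Definition Fop (G : forall i : 'I_n, J -> 'rV[R]_(d i)) (x : J) : J := fun i => G i x.

Definition QSM (G : forall i : 'I_n, J -> 'rV[R]_(d i)) (xs : J) (mu : R) : Prop :=
  (forall i, Fop G xs i = 0) /\ (forall y : J, (forall i, Fop G y i = 0) -> y = xs) /\
  0 < mu /\ forall x : J, jdot (Fop G x) (jsub x xs) >= mu * jnorm2 (jsub x xs).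

Definition SCO (G : forall i : 'I_n, J -> 'rV[R]_(d i)) (xs : J) (ell : R) : Prop :=
  0 < ell /\ forall x : J, jdot (Fop G x) (jsub x xs) >= ell^-1 * jnorm2 (Fop G x).

(* Deterministic PEARL-SGD with step sizes gam k.
   local_iter xs p i t = x^i_{tau p + t}, given xs = x_{tau p}. *)
Fixpoint local_iter (G : forall i : 'I_n, J -> 'rV[R]_(d i)) (gam : nat -> R)
  (tau p : nat) (xs : J) (i : 'I_n) (t : nat) : 'rV[R]_(d i) :=
  match t with
  | 0 => xs i
  | t'.+1 => local_iter G gam tau p xs i t'
             - gam (tau * p + t')%N *: G i (upd xs (local_iter G gam tau p xs i t'))
  end.

(* sync_iter p = x_{tau p} *)
Fixpoint sync_iter (G : forall i : 'I_n, J -> 'rV[R]_(d i)) (gam : nat -> R)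
  (tau : nat) (x0 : J) (p : nat) : J :=
  match p with
  | 0 => x0
  | p'.+1 => fun i => local_iter G gam tau p' (sync_iter G gam tau x0 p') i tau
  end.

Definition pearl_iter (G : forall i : 'I_n, J -> 'rV[R]_(d i)) (gam : nat -> R)
  (tau : nat) (x0 : J) (k : nat) : J :=
  fun i => local_iter G gam tau (k %/ tau) (sync_iter G gam tau x0 (k %/ tau)) i (k %% tau).

End Defs.

(* Main.v *)
Require Import Defs.
From HB Require Import structures.
From mathcomp Require Import all_boot all_order all_algebra.
From mathcomp Require Import all_classical all_reals all_analysis.
From mathcomp Require Import lra ring zify.
Import Order.TTheory GRing.Theory Num.Theory.
Import numFieldNormedType.Exports.
Local Open Scope ring_scope.
Section AnalysisPart.
Local Open Scope classical_set_scope.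

Lemma fo_convex (R : realType) m (phi : 'rV[R]_m -> R) (g y z : 'rV[R]_m) :
 (forall t, 0 <= t -> t <= 1 -> phi (t *: z + (1-t) *: y) <= t * phi z + (1-t) * phi y) ->
 differentiable phi y -> (forall v, 'd phi y v = vdot g v) -> phi y + vdot g (z - y) <= phi z.
Proof.
move=> Hc Hd Hg.
set v := z - y.
have Hder : derivable phi y v by exact: diff_derivable.
have E : 'D_v phi y = vdot g v by rewrite deriveE // Hg.
have cv := cvg_dnbhs_at_right Hder.
rewrite -E addrC -lerBrDr.
apply: (cvgr_to_le cv).
near=> h.
have h0 : 0 < h by near: h; exact: nbhs_right_gt.
have h1 : h <= 1 by near: h; exact: nbhs_right_le.
rewrite /= /v.
have E2 : h *: (z - y) + y = h *: z + (1 - h) *: y.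
  by rewrite scalerBr scalerBl scale1r addrA addrAC.
rewrite E2.
change (h^-1 * (phi (h *: z + (1 - h) *: y) - phi y) <= phi z - phi y).

rewrite ler_pdivrMl //.
have := Hc h (ltW h0) h1. 
move=> H. rewrite mulrBr. lra.
Unshelve. all: by end_near.
Qed.

End AnalysisPart.

Section Vec.
Variable R : realType.

Lemma CS_sum (I : finType) (a b : I -> R) :
  (\sum_i a i * b i) ^+ 2 <= (\sum_i a i ^+ 2) * (\sum_i b i ^+ 2).
Proof.
set A := \sum_i a i ^+ 2; set B := \sum_i b i ^+ 2; set C := \sum_i a i * b i.
have quad : forall t, 0 <= A + 2 * t * C + t ^+ 2 * B.
  move=> t.
  have -> : A + 2 * t * C + t ^+ 2 * B = \sum_i (a i + t * b i) ^+ 2.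
    rewrite /A /B /C !mulr_sumr -!big_split /=.
    by apply: eq_bigr => i _; ring.
  by apply: sumr_ge0 => i _; exact: sqr_ge0.
have B0 : 0 <= B by apply: sumr_ge0 => i _; exact: sqr_ge0.
have A0 : 0 <= A by apply: sumr_ge0 => i _; exact: sqr_ge0.
case: (ltrgtP B 0) => [|Bp|Be]; first by rewrite ltNge B0.
  have := quad (- C / B).
  move=> H.
  have E3 : A + 2 * (- C / B) * C + (- C / B) ^+ 2 * B = A - C ^+ 2 / B.
    field. exact: lt0r_neq0.
  rewrite E3 in H. move: H.
  by rewrite subr_ge0 ler_pdivrMr.
have bz : forall i, b i = 0.
  move=> i; apply/eqP; rewrite -sqrf_eq0; apply/eqP.
  move: Be; rewrite /B => /eqP; rewrite psumr_eq0; last by move=> j _; exact: sqr_ge0.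
  by move/allP => /(_ i (mem_index_enum i)) /= /eqP.
have -> : C = 0 by rewrite /C big1 // => i _; rewrite bz mulr0.
rewrite expr0n /=. by rewrite Be mulr0.
Qed.

Lemma CS_sqrt (I : finType) (a b : I -> R) :
  \sum_i a i * b i <= Num.sqrt (\sum_i a i ^+ 2) * Num.sqrt (\sum_i b i ^+ 2).
Proof.
have A0 : 0 <= \sum_i a i ^+ 2 by apply: sumr_ge0 => i _; exact: sqr_ge0.
rewrite -sqrtrM //.
apply: (le_trans (ler_norm _)).
rewrite -sqrtr_sqr; apply: ler_wsqrtr; exact: CS_sum.
Qed.

Variable k : nat.
Implicit Types (u v w : 'rV[R]_k).

Lemma vdotC u v : vdot u v = vdot v u.
Proof. by apply: eq_bigr => j _; rewrite mulrC. Qed.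
Lemma vdotDl u v w : vdot (u + v) w = vdot u w + vdot v w.
Proof. by rewrite /vdot -big_split; apply: eq_bigr => j _; rewrite !mxE mulrDl. Qed.
Lemma vdotDr u v w : vdot w (u + v) = vdot w u + vdot w v.
Proof. by rewrite vdotC vdotDl !(vdotC w). Qed.
Lemma vdotZl c u w : vdot (c *: u) w = c * vdot u w.
Proof. by rewrite /vdot mulr_sumr; apply: eq_bigr => j _; rewrite !mxE mulrA. Qed.
Lemma vdotZr c u w : vdot w (c *: u) = c * vdot w u.
Proof. by rewrite vdotC vdotZl vdotC. Qed.
Lemma vdotNl u w : vdot (- u) w = - vdot u w.
Proof. by rewrite -scaleN1r vdotZl mulN1r. Qed.
Lemma vdotNr u w : vdot w (- u) = - vdot w u.
Proof. by rewrite vdotC vdotNl vdotC. Qed.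
Lemma vdotBl u v w : vdot (u - v) w = vdot u w - vdot v w.
Proof. by rewrite vdotDl vdotNl. Qed.
Lemma vdotBr u v w : vdot w (u - v) = vdot w u - vdot w v.
Proof. by rewrite vdotDr vdotNr. Qed.
Lemma vdot_ge0 u : 0 <= vdot u u.
Proof. by apply: sumr_ge0 => j _; rewrite -expr2 sqr_ge0. Qed.
Lemma vnorm_ge0 u : 0 <= vnorm u.
Proof. exact: sqrtr_ge0. Qed.
Lemma sqr_vnorm u : vnorm u ^+ 2 = vdot u u.
Proof. by rewrite sqr_sqrtr // vdot_ge0. Qed.
Lemma vdot_CS u v : vdot u v <= vnorm u * vnorm v.
Proof.
have := @CS_sqrt 'I_k (fun j => u 0 j) (fun j => v 0 j).
have E : forall w : 'rV[R]_k, \sum_(j < k) (w 0 j) ^+ 2 = vdot w w.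
  by move=> w; apply: eq_bigr => j _; rewrite expr2.
by rewrite !E.
Qed.
Lemma vnormZ c u : vnorm (c *: u) = `|c| * vnorm u.
Proof. by rewrite /vnorm vdotZl vdotZr mulrA -expr2 sqrtrM ?sqr_ge0 // sqrtr_sqr. Qed.
Lemma vnormN u : vnorm (- u) = vnorm u.
Proof. by rewrite -scaleN1r vnormZ normrN normr1 mul1r. Qed.
Lemma vnormD u v : vnorm (u + v) <= vnorm u + vnorm v.
Proof.
rewrite -(ler_pXn2r (_ : 0 < 2)%N) ?nnegrE ?addr_ge0 ?vnorm_ge0 //.
rewrite sqr_vnorm vdotDl !vdotDr (vdotC v u) sqrrD !sqr_vnorm.
have := vdot_CS u v. lra.
Qed.
Lemma vnormB u v : vnorm (u - v) <= vnorm u + vnorm v.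
Proof. by rewrite -(vnormN v) vnormD. Qed.
Lemma vnorm_sum (I : Type) (r : seq I) (F : I -> 'rV[R]_k) :
  vnorm (\sum_(j <- r) F j) <= \sum_(j <- r) vnorm (F j).
Proof.
elim: r => [|a r IH]; first by rewrite !big_nil /vnorm /vdot big1 ?sqrtr0 // => j _; rewrite mxE mul0r.
rewrite !big_cons; apply: (le_trans (vnormD _ _)); exact: lerD.
Qed.

End Vec.
Arguments vdotC {R k}.
Arguments vdotDl {R k}.
Arguments vdotDr {R k}.
Arguments vdotZl {R k}.
Arguments vdotZr {R k}.
Arguments vdotNl {R k}.
Arguments vdotNr {R k}.
Arguments vdotBl {R k}.
Arguments vdotBr {R k}.
Arguments vdot_ge0 {R k}.
Arguments vnorm_ge0 {R k}.
Arguments sqr_vnorm {R k}.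
Arguments vdot_CS {R k}.
Arguments vnormZ {R k}.
Arguments vnormN {R k}.
Arguments vnormD {R k}.
Arguments vnormB {R k}.
Arguments vnorm_sum {R k I}.

Section Block.
Variables (R : realType) (k : nat) (g : 'rV[R]_k -> 'rV[R]_k) (y : nat -> 'rV[R]_k)
  (L gam : R).
Hypothesis L0 : 0 < L.
Hypothesis gam0 : 0 < gam.
Hypothesis Hlip : forall a b, vnorm (g a - g b) <= L * vnorm (a - b).
Hypothesis Hmono : forall a b, 0 <= vdot (g a - g b) (a - b).
Hypothesis Hy : forall s, y s.+1 = y s - gam *: g (y s).

Local Notation N s := (vdot (g (y s)) (g (y s))).

Lemma grad_step s : N s.+1 <= (1 + gam ^+ 2 * L ^+ 2) * N s.
Proof.
set del := g (y s.+1) - g (y s).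
have E : g (y s.+1) = g (y s) + del by rewrite /del addrC subrK.
have m : vdot del (g (y s)) <= 0.
  have := Hmono (y s.+1) (y s); rewrite -/del Hy addrAC subrr add0r vdotNr vdotZr.
  rewrite oppr_ge0 pmulr_rle0 //.
have l : vdot del del <= gam ^+ 2 * L ^+ 2 * N s.
  have := Hlip (y s.+1) (y s); rewrite -/del Hy addrAC subrr add0r vnormN vnormZ.
  rewrite gtr0_norm // => H.
  rewrite -sqr_vnorm -sqr_vnorm.
  have H0 : 0 <= vnorm del by exact: vnorm_ge0.
  have H1 : 0 <= vnorm (g (y s)) by exact: vnorm_ge0.
  set u := vnorm del in H H0 *; set w := vnorm (g (y s)) in H H1 *.
  have : 0 <= gam by exact: ltW.
  have : 0 <= L by exact: ltW.
  nra.
clearbody del; rewrite E vdotDl !vdotDr (vdotC (g (y s)) del).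
have := vdot_ge0 (g (y s)). lra.
Qed.

Variable K : nat.
Hypothesis HK : gam ^+ 2 * L ^+ 2 * K%:R <= 1 / 16.

Lemma grad_bound s : (s <= K)%N -> N s <= (1 + 16 / 15 * (gam ^+ 2 * L ^+ 2) * s%:R) * N 0.
Proof.
elim: s => [|s IH] Hs; first by rewrite mulr0 addr0 mul1r.
have IH' := IH (ltnW Hs).
apply: (le_trans (grad_step s)).
have a0 : 0 <= gam ^+ 2 * L ^+ 2 by rewrite mulr_ge0 // sqr_ge0.
have N0 : 0 <= N 0 by exact: vdot_ge0.
have sK : s.+1%:R <= K%:R :> R by rewrite ler_nat.
have as0 : gam ^+ 2 * L ^+ 2 * s.+1%:R <= 1 / 16.
  apply: le_trans HK; apply: ler_wpM2l => //.
rewrite -natr1 in as0 *.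
set a := gam ^+ 2 * L ^+ 2 in a0 as0 IH' *.
set S := s%:R in as0 IH' *.
have S0 : 0 <= S by exact: ler0n.
apply: (le_trans (ler_wpM2l (_ : 0 <= 1 + a) IH')); first lra.
rewrite mulrA; apply: ler_wpM2r => //.
nra.
Qed.

Definition rho : R := 16 / 15.

Lemma grad_norm_bound s : (s <= K)%N -> vnorm (g (y s)) <= rho * vnorm (g (y 0)).
Proof.
move=> Hs; have := grad_bound s Hs.
have a0 : 0 <= gam ^+ 2 * L ^+ 2 by rewrite mulr_ge0 // sqr_ge0.
have sK : s%:R <= K%:R :> R by rewrite ler_nat.
have as0 : gam ^+ 2 * L ^+ 2 * s%:R <= 1 / 16.
  apply: le_trans HK; apply: ler_wpM2l => //.
move=> H.
have H2 : vnorm (g (y s)) ^+ 2 <= (rho * vnorm (g (y 0))) ^+ 2.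
  rewrite exprMn !sqr_vnorm /rho. apply: (le_trans H).
  have N0 : 0 <= N 0 by exact: vdot_ge0.
  set a := gam ^+ 2 * L ^+ 2 in a0 as0 *.
  have S0 : 0 <= s%:R :> R by exact: ler0n.
  nra.
rewrite -(ler_pXn2r (_ : 0 < 2)%N) // nnegrE ?vnorm_ge0 //.
by rewrite mulr_ge0 ?vnorm_ge0 // /rho.
Qed.

Lemma disp_bound t : (t <= K.+1)%N -> vnorm (y t - y 0) <= gam * t%:R * rho * vnorm (g (y 0)).
Proof.
elim: t => [|t IH] Ht.
  rewrite subrr mulr0 !mul0r /vnorm /vdot big1 ?sqrtr0 // => j _; by rewrite mxE mul0r.
rewrite Hy addrAC.
apply: (le_trans (vnormB _ _)).
rewrite vnormZ gtr0_norm //.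
have := IH (ltnW Ht).
have H1 := grad_norm_bound t (Ht : (t < K.+1)%N). move=> H2.
rewrite -natr1.
have : 0 <= gam by exact: ltW.
nra.
Qed.

End Block.

Section Upd.
Variables (R : realType) (n : nat) (d : 'I_n -> nat).
Local Notation J := (joint R d).

Lemma upd_at (x : J) i (y : 'rV[R]_(d i)) : upd x y i = y.
Proof. exact: dfwith_in. Qed.

Lemma upd_upd (x : J) i (y z : 'rV[R]_(d i)) : upd (upd x y) z = upd x z.
Proof.
apply: functional_extensionality_dep => j; rewrite /upd.
case: (eqVneq i j) => [<-|ij]. by rewrite /dfwith; case: eqP.
by rewrite /dfwith; case: eqP => // e; move: ij; rewrite e eqxx.
Qed.

Lemma upd_id (x : J) i : upd x (x i) = x.
Proof.
apply: functional_extensionality_dep => j; rewrite /upd.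
case: (eqVneq i j) => [<-|ij]; first by rewrite /dfwith; case: eqP => // e; rewrite eq_axiomK.
by rewrite /dfwith; case: eqP => // e; move: ij; rewrite (introT eqP e).
Qed.

Lemma grad_mono (f : 'I_n -> J -> R) (G : forall i : 'I_n, J -> 'rV[R]_(d i))
  (x : J) i : is_partial_grad f G -> CVX f ->
  forall a b, 0 <= vdot (G i (upd x a) - G i (upd x b)) (a - b).
Proof.
move=> Hg Hc.
have fo : forall a b, f i (upd x a) + vdot (G i (upd x a)) (b - a) <= f i (upd x b).
  move=> a b.
  have [H1 H2] := Hg i (upd x a).
  rewrite upd_at in H1 H2.
  have E : (fun y : 'rV[R]_(d i) => f i (upd (upd x a) y)) = (fun y : 'rV[R]_(d i) => f i (upd x y)).
    by apply: functional_extensionality_dep => y; rewrite upd_upd.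
  rewrite E in H1 H2.
  apply: (@fo_convex R (d i) (fun y => f i (upd x y))) => //.
  move=> t t0 t1; exact: Hc.
move=> a b.
have := fo a b; have := fo b a.
rewrite -(opprB a b) vdotNr vdotBl. lra.
Qed.

End Upd.

Section Round.
Variables (R : realType) (n : nat) (d : 'I_n -> nat).
Local Notation J := (joint R d).
Variables (f : 'I_n -> J -> R) (G : forall i : 'I_n, J -> 'rV[R]_(d i))
  (L : 'I_n -> R) (xs : J) (tau : nat) (gam Lm : R).
Hypothesis Hg : is_partial_grad f G.
Hypothesis Hc : CVX f.
Hypothesis Hsm : SM G L.
Hypothesis tau1 : (1 <= tau)%N.
Hypothesis gam0 : 0 < gam.
Hypothesis HLm : forall i, L i <= Lm.
Hypothesis Lm0 : 0 <= Lm.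
Hypothesis hm : gam * Lm * (tau%:R - 1) <= 1 / 2.

Variables (x : J) (p : nat).
Local Notation y i t := (local_iter G (fun _ => gam) tau p x i t).

Lemma liter_sum i t : y i t = x i - gam *: \sum_(s < t) G i (upd x (y i s)).
Proof.
elim: t => [|t IH]; first by rewrite big_ord0 scaler0 subr0.
rewrite /= IH big_ord_recr /= scalerDr opprD addrA.
by rewrite -IH.
Qed.

Definition Tsum : R := \sum_(t < tau) (t%:R : R).

Lemma S_bound i :
  vnorm (\sum_(t < tau) (G i (upd x (y i t)) - G i x))
    <= L i * gam * rho R * vnorm (G i x) * Tsum.
Proof.
have [L0 Hl] := Hsm i.
have Hlip : forall a b : 'rV[R]_(d i), vnorm (G i (upd x a) - G i (upd x b)) <= L i * vnorm (a - b).
  by move=> a b; exact: Hl.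
have Hmono := @grad_mono R n d f G x i Hg Hc.
have Hy : forall s, y i s.+1 = y i s - gam *: G i (upd x (y i s)) by [].
have HK : gam ^+ 2 * L i ^+ 2 * (tau - 2)%N%:R <= 1 / 16.
  have Li : gam * L i * (tau%:R - 1) <= 1 / 2.
    apply: le_trans hm; apply: ler_wpM2r; first by rewrite subr_ge0 ler1n.
    by apply: ler_wpM2l => //; exact: ltW.
  case: (leqP tau 1) => t1.
    have -> : (tau - 2)%N = 0%N by apply/eqP; rewrite subn_eq0 (leq_trans t1).
    by rewrite mulr0.
  rewrite natrB //.
  set b := gam * L i in Li *.
  have -> : gam ^+ 2 * L i ^+ 2 = b ^+ 2 by rewrite /b exprMn.
  have : 2%:R <= tau%:R :> R by rewrite ler_nat.
  have b0 : 0 <= b by rewrite /b mulr_ge0 // ltW.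
  move=> t2.
  set T := tau%:R - 1 in Li.
  have -> : (tau%:R - 2 : R) = T - 1 by rewrite /T; ring.
  have T1 : 1 <= T by rewrite /T; lra.
  have bT : 0 <= b * T by rewrite mulr_ge0 //; lra.
  have h1 : (b * T) ^+ 2 <= 1 / 4.
    rewrite expr2; apply: le_trans (ler_pM bT bT Li Li) _; lra.
  have h2 : b ^+ 2 * (4 * (T - 1)) <= b ^+ 2 * T ^+ 2.
    apply: ler_wpM2l; first exact: sqr_ge0. have := sqr_ge0 (T - 2). rewrite sqrrB expr2. lra.
  rewrite exprMn in h1. nra.
have Hd := @disp_bound R (d i) (fun a => G i (upd x a)) (fun t => y i t) (L i) gam L0 gam0 Hlip Hmono Hy _ HK.
apply: (le_trans (vnorm_sum (index_enum _) (fun t : 'I_tau => G i (upd x (y i t)) - G i x))).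
rewrite /Tsum mulr_sumr; apply: ler_sum => t _.
have -> : G i x = G i (upd x (y i 0)) by rewrite /= upd_id.
apply: (le_trans (Hlip _ _)).
have tK : (t <= (tau - 2).+1)%N.
  have := ltn_ord t; move: (t : nat) => tt; lia.
have := Hd t tK.
have : 0 <= L i by exact: ltW.
rewrite /= upd_id. nra.
Qed.

Lemma round_bound beta D2 c P2 W :
  beta = Lm * gam * rho R * Tsum ->
  D2 = jnorm2 (jsub x xs) ->
  c = jdot (Fop G x) (jsub x xs) ->
  P2 = jnorm2 (Fop G x) ->
  W = D2 - 2 * (gam * tau%:R) * c + (gam * tau%:R) ^+ 2 * P2 ->
  jnorm2 (jsub (fun i => y i tau) xs)
    <= W + 2 * gam * beta * (Num.sqrt W * Num.sqrt P2) + gam ^+ 2 * beta ^+ 2 * P2.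
Proof.
move=> Hb HD Hc' HP HW.
have T0 : 0 <= Tsum by apply: sumr_ge0 => t _; exact: ler0n.
have b0 : 0 <= beta.
  by rewrite Hb !mulr_ge0 // ?ltW // /rho.
set w := fun i => (x i - xs i) - (gam * tau%:R) *: G i x.
set S := fun i => \sum_(t < tau) (G i (upd x (y i t)) - G i x).
have E : forall i, y i tau - xs i = w i - gam *: S i.
  move=> i; rewrite liter_sum /w /S sumrB sumr_const card_ord.
  set v := \sum_(_ < tau) _. set u := G i x.
  rewrite -[u *+ tau]scaler_nat scalerBr scalerA opprB addrA subrK.
  by rewrite addrAC.
have Sb : forall i, vnorm (S i) <= beta * vnorm (G i x).
  move=> i; apply: (le_trans (S_bound i)).
  have K0 : 0 <= gam * rho R * vnorm (G i x) * Tsum.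
    by rewrite !mulr_ge0 ?vnorm_ge0 // ?ltW // /rho.
  have := ler_wpM2r K0 (HLm i).
  move=> H; apply: le_trans (le_trans _ H) _; rewrite ?Hb le_eqVlt; apply/orP; left; apply/eqP; rewrite /rho; ring.
have EW : \sum_i vdot (w i) (w i) = W.
  rewrite HW HD Hc' HP /jnorm2 /jdot /jsub /Fop.
  rewrite !mulr_sumr -sumrB -big_split /=; apply: eq_bigr => i _.
  rewrite /w /=; move: (x i - xs i) (G i x) => a u; rewrite vdotBl !vdotBr !vdotZl !vdotZr (vdotC a u). ring.
clearbody w S.
have per : forall i, vdot (y i tau - xs i) (y i tau - xs i)
   <= vdot (w i) (w i) + 2 * gam * beta * (vnorm (w i) * vnorm (G i x))
      + gam ^+ 2 * beta ^+ 2 * vdot (G i x) (G i x).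
  move=> i; rewrite E vdotBl !vdotBr !vdotZl !vdotZr (vdotC (S i) (w i)).
  have h1 : - vdot (w i) (S i) <= vnorm (w i) * (beta * vnorm (G i x)).
    rewrite -vdotNl; apply: (le_trans (vdot_CS _ _)); rewrite vnormN.
    apply: ler_wpM2l; [exact: vnorm_ge0 | exact: Sb].
  have h2 : vdot (S i) (S i) <= beta ^+ 2 * vdot (G i x) (G i x).
    rewrite -!sqr_vnorm -exprMn.
    have := Sb i; have := vnorm_ge0 (S i). move: (vnorm (S i)) (beta * vnorm (G i x)) => a b' H0 H1.
    rewrite !expr2; exact: ler_pM.
  have g0 : 0 <= gam by exact: ltW.
  have : 0 <= gam ^+ 2 by exact: sqr_ge0.
  nra.
rewrite /jnorm2 /jdot /=.
apply: (le_trans (ler_sum _ (fun i _ => per i))).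
rewrite !big_split /= -!mulr_sumr.
rewrite EW.
rewrite HP; apply: lerD; last by []. apply: lerD => //.
apply: ler_wpM2l; first by rewrite !mulr_ge0 // ltW.
have := @CS_sqrt R 'I_n (fun i => vnorm (w i)) (fun i => vnorm (G i x)).
have e1 : \sum_i vnorm (w i) ^+ 2 = W by rewrite -EW; apply: eq_bigr => i _; rewrite sqr_vnorm.
have e2 : \sum_i vnorm (G i x) ^+ 2 = jnorm2 (Fop G x).
  by rewrite /jnorm2 /jdot; apply: eq_bigr => i _; rewrite sqr_vnorm.
by rewrite e1 e2.
Qed.

End Round.

Lemma Tsum_eq (R : realType) m : Tsum R m * 2 = m%:R * (m%:R - 1).
Proof.
rewrite /Tsum; elim: m => [|m IH]; first by rewrite big_ord0 mul0r mul0r.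
rewrite big_ord_recr /= mulrDl IH -natr1. ring.
Qed.

Lemma scalar_main (R : realType) (g tt ell mu Lm sk s3 c D2 P2 W beta zeta : R) :
  0 < g -> 1 <= tt -> 0 < ell -> 0 < mu -> mu <= ell -> 0 <= Lm ->
  1 <= sk -> 23 / 40 * sk <= s3 -> s3 <= sk ->
  sk * sk = ell / mu ->
  g * (ell * tt + 2 * (tt - 1) * Lm * sk) <= 1 ->
  0 <= D2 -> mu * D2 <= c -> P2 <= ell * c -> 0 <= P2 ->
  W = D2 - 2 * (g * tt) * c + (g * tt) ^+ 2 * P2 ->
  beta = Lm * g * (16 / 15) * (tt * (tt - 1) / 2) ->
  zeta = 2 - g * ell * tt - 2 * (tt - 1) * g * Lm * s3 ->
  W + 2 * g * beta * (Num.sqrt W * Num.sqrt P2) + g ^+ 2 * beta ^+ 2 * P2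
    <= (1 - g * tt * mu * zeta) * D2.
Proof.
move=> g0 tt1 l0 m0 ml Lm0 sk1 s3l s3u skk step D0 cD Pc P0 HW Hb Hz.
have c0 : 0 <= c by apply: le_trans cD; rewrite mulr_ge0 // ltW.
set p := g * ell * tt.
set m := g * Lm * (tt - 1).
have p0 : 0 <= p by rewrite /p; apply: mulr_ge0; [apply: mulr_ge0; exact: ltW | lra].
have m0' : 0 <= m by rewrite /m; apply: mulr_ge0; [apply: mulr_ge0 => //; exact: ltW | lra].
have pm : p + 2 * m * sk <= 1 by move: step; rewrite /p /m; lra.
have pm2 : p + 2 * m <= 1 by have := ler_wpM2l m0' sk1; rewrite mulr1; lra.
have mp : m * p <= 1 / 8.
  have s0 : 0 <= p + 2 * m by lra.
  have h := ler_pM s0 s0 pm2 pm2.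
  have := sqr_ge0 (p - 2 * m). rewrite expr2. nra.
have gt0 : 0 <= g * tt by apply: mulr_ge0; [exact: ltW | lra].
have WD : W <= D2.
  rewrite HW.
  have : (g * tt) ^+ 2 * P2 <= (g * tt) ^+ 2 * (ell * c) by apply: ler_wpM2l => //; exact: sqr_ge0.
  have : g * tt * ell <= 1 by move: pm; rewrite /p; nra.
  move=> h1 h2.
  have h3 : (g * tt) * (g * tt * ell) * c <= (g * tt) * 1 * c.
    by apply: ler_wpM2r => //; apply: ler_wpM2l.
  have e : (g * tt) ^+ 2 * (ell * c) = (g * tt) * (g * tt * ell) * c by ring.
  have := mulr_ge0 gt0 c0. lra.
have SB : Num.sqrt W * Num.sqrt P2 <= sk * c.
  apply: le_trans (_ : Num.sqrt D2 * Num.sqrt P2 <= _).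
    by apply: ler_wpM2r; [exact: sqrtr_ge0 | exact: ler_wsqrtr].
  rewrite -sqrtrM //.
  have sk0 : 0 <= sk by lra.
  rewrite -(ger0_norm c0) -(ger0_norm sk0) -normrM -sqrtr_sqr.
  apply: ler_wsqrtr.
  have H : mu * (D2 * P2) <= c * (ell * c).
    rewrite mulrA; apply: ler_pM => //; exact: mulr_ge0 (ltW m0) D0.
  rewrite exprMn expr2 skk -(ler_pM2l m0).
  have -> : mu * (ell / mu * c ^+ 2) = c * (ell * c).
    field. exact: lt0r_neq0.
  exact: H.
have b0 : 0 <= beta.
  rewrite Hb; apply: mulr_ge0; [apply: mulr_ge0; [apply: mulr_ge0 => //; exact: ltW|lra]|].
  apply: mulr_ge0; [apply: mulr_ge0; lra | lra].
set Z := g ^+ 2 * tt * (tt - 1) * Lm.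
have Z0 : 0 <= Z.
  rewrite /Z; apply: mulr_ge0 => //; apply: mulr_ge0; [apply: mulr_ge0; [exact: sqr_ge0|lra]|lra].
have E1 : 2 * g * beta * sk = Z * (16 / 15 * sk).
  by rewrite Hb /Z; field.
have E2 : g ^+ 2 * beta ^+ 2 * ell = Z * ((16 / 15) ^+ 2 * (m * p) / 4) by rewrite Hb /Z /m /p; field.
have E3 : g * tt * (2 * m * s3) = Z * (2 * s3) by rewrite /Z /m; field.
have inner : 16 / 15 * sk + (16 / 15) ^+ 2 * (m * p) / 4 <= 2 * s3.
  have mp0 : 0 <= m * p by exact: mulr_ge0.
  rewrite expr2. lra.
have key : 2 * g * beta * sk + g ^+ 2 * beta ^+ 2 * ell <= g * tt * (2 * m * s3).
  by rewrite E1 E2 E3 -mulrDr; apply: ler_wpM2l.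
have s30 : 0 <= s3 by lra.
have ms3 : m * s3 <= m * sk by apply: ler_wpM2l.
have zp : zeta = 2 - p - 2 * m * s3 by rewrite Hz /p /m; field.
have z0 : 0 <= zeta by rewrite zp; lra.
have L1 : W + 2 * g * beta * (Num.sqrt W * Num.sqrt P2) + g ^+ 2 * beta ^+ 2 * P2
    <= W + 2 * g * beta * (sk * c) + g ^+ 2 * beta ^+ 2 * (ell * c).
  apply: lerD; [apply: lerD => //|].
    by apply: ler_wpM2l => //; rewrite !mulr_ge0 // ltW.
  by apply: ler_wpM2l => //; rewrite mulr_ge0 // sqr_ge0.
apply: le_trans L1 _.
have HW2 : W <= D2 - 2 * (g * tt) * c + (g * tt) ^+ 2 * (ell * c).
  by rewrite HW lerD2l; apply: ler_wpM2l => //; exact: sqr_ge0.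
have key2 : c * (2 * g * beta * sk + g ^+ 2 * beta ^+ 2 * ell) <= c * (g * tt * (2 * m * s3)).
  by apply: ler_wpM2l.
have gz : 0 <= g * tt * zeta by exact: mulr_ge0.
have key3 : (g * tt * zeta) * (mu * D2) <= (g * tt * zeta) * c by apply: ler_wpM2l.
have e4 : (g * tt) ^+ 2 * (ell * c) = c * (g * tt) * p by rewrite /p; field.
have e5 : g * tt * zeta * c = c * (g * tt) * (2 - p - 2 * m * s3) by rewrite zp; field.
have e6 : (1 - g * tt * mu * zeta) * D2 = D2 - g * tt * zeta * (mu * D2) by field.
rewrite e6.
move: key2 key3 HW2; rewrite e4 e5.
have e7 : c * (g * tt * (2 * m * s3)) = c * (g * tt) * (2 * m * s3) by field.
rewrite e7.
have e8 : c * (2 * g * beta * sk + g ^+ 2 * beta ^+ 2 * ell) = 2 * g * beta * (sk * c) + g ^+ 2 * beta ^+ 2 * (ell * c) by field.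
rewrite e8.
lra.
Qed.

Lemma jdot_CS (R : realType) (n : nat) (d : 'I_n -> nat) (a b : joint R d) :
  jdot a b <= Num.sqrt (jnorm2 a) * Num.sqrt (jnorm2 b).
Proof.
apply: le_trans (_ : \sum_i vnorm (a i) * vnorm (b i) <= _).
  by apply: ler_sum => i _; exact: vdot_CS.
have := @CS_sqrt R 'I_n (fun i => vnorm (a i)) (fun i => vnorm (b i)).
have e : forall c : joint R d, \sum_i vnorm (c i) ^+ 2 = jnorm2 c.
  by move=> c; rewrite /jnorm2 /jdot; apply: eq_bigr => i _; rewrite sqr_vnorm.
by rewrite !e.
Qed.

Lemma mu_le_ell (R : realType) (n : nat) (d : 'I_n -> nat)
  (G : forall i : 'I_n, joint R d -> 'rV[R]_(d i)) (xs : joint R d) (mu ell : R) :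
  (0 < n)%N -> (forall i, (0 < d i)%N) -> QSM G xs mu -> SCO G xs ell -> mu <= ell.
Proof.
move=> n0 d0 [_ [_ [mu0 Hq]]] [l0 Hs].
pose x1 : joint R d := fun i => xs i + const_mx 1.
have Ej : jsub x1 xs = fun i => const_mx 1.
  by apply: functional_extensionality_dep => i; rewrite /jsub /x1 addrAC subrr add0r.
set D := jnorm2 (jsub x1 xs).
have DE : D = \sum_i ((d i)%:R : R).
  rewrite /D Ej /jnorm2 /jdot; apply: eq_bigr => i _.
  rewrite /vdot (eq_bigr (fun _ => 1)); last by move=> j _; rewrite mxE mulr1.
  by rewrite sumr_const card_ord.
have D0 : 0 < D.
  rewrite DE (bigD1 (Ordinal n0)) //=.
  apply: ltr_pwDl; first by rewrite ltr0n.
  by apply: sumr_ge0 => i _; exact: ler0n.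
set c := jdot (Fop G x1) (jsub x1 xs).
set P := jnorm2 (Fop G x1).
have h1 : mu * D <= c := Hq x1.
have h2 : ell^-1 * P <= c := Hs x1.
have h3 : c <= Num.sqrt D * Num.sqrt P by rewrite /c /D /P mulrC; exact: jdot_CS.
have P0 : 0 <= P by apply: sumr_ge0 => i _; exact: vdot_ge0.
have c0 : 0 < c by apply: lt_le_trans h1; exact: mulr_gt0.
have Pc : P <= ell * c by rewrite -ler_pdivrMl // mulrC -[P / _]mulrC.
have h4 : c ^+ 2 <= D * P.
  rewrite -(@sqr_sqrtr _ (D * P)); last by rewrite mulr_ge0 // ltW.
  rewrite sqrtrM; last exact: ltW. rewrite !expr2; apply: ler_pM => //; exact: ltW.
have h5 : c <= ell * D.
  have : c * c <= (ell * D) * c by rewrite -expr2; apply: le_trans h4 _; rewrite (mulrC ell) -mulrA; apply: ler_wpM2l => //; exact: ltW.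
  by rewrite ler_pM2r.
have : mu * D <= ell * D by exact: le_trans h5.
by rewrite ler_pM2r.
Qed.

Theorem theorem1 (R : realType) (n : nat) (d : 'I_n -> nat)
  (f : 'I_n -> joint R d -> R) (G : forall i : 'I_n, joint R d -> 'rV[R]_(d i))
  (L : 'I_n -> R) (xs : joint R d) (mu ell : R)
  (tau Rr : nat) (gam : R) (x0 : joint R d) :
  (0 < n)%N -> (forall i, (0 < d i)%N) ->
  is_partial_grad f G -> CVX f -> SM G L -> QSM G xs mu -> SCO G xs ell ->
  (1 <= tau)%N -> (1 <= Rr)%N ->
  let Lmax := \big[Num.max/0]_(i < n) L i in
  let kappa := ell / mu in
  0 < gam ->
  gam <= (ell * tau%:R + 2 * (tau%:R - 1) * Lmax * Num.sqrt kappa)^-1 ->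
  let zeta := 2 - gam * ell * tau%:R - 2 * (tau%:R - 1) * gam * Lmax * Num.sqrt (kappa / 3) in
  jnorm2 (jsub (pearl_iter G (fun _ => gam) tau x0 (tau * Rr)%N) xs)
    <= (1 - gam * tau%:R * mu * zeta) ^+ Rr * jnorm2 (jsub x0 xs).
Proof.
move=> n0 d0 Hg Hc Hsm Hq Hs tau1 R1 Lmax kappa gam0 Hstep; cbv zeta.
set zeta := 2 - gam * ell * tau%:R - _.
have ml := @mu_le_ell R n d G xs mu ell n0 d0 Hq Hs.
have [_ [_ [mu0 Hqsm]]] := Hq.
have [l0 Hsco] := Hs.
have HLm : forall i, L i <= Lmax.
  by move=> i; rewrite /Lmax (bigD1 i) //= le_max lexx.
have Lm0 : 0 <= Lmax.
  by apply: le_trans (HLm (Ordinal n0)); have [H _] := Hsm (Ordinal n0); exact: ltW.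
set tt := tau%:R : R.
have tt1 : 1 <= tt by rewrite /tt ler1n.
set sk := Num.sqrt kappa.
set s3 := Num.sqrt (kappa / 3).
have k1 : 1 <= kappa by rewrite /kappa ler_pdivlMr // mul1r.
have k0 : 0 <= kappa by lra.
have sk1 : 1 <= sk by rewrite /sk -sqrtr1; exact: ler_wsqrtr.
have skk : sk * sk = ell / mu by rewrite /sk -expr2 sqr_sqrtr.
have s3u : s3 <= sk by apply: ler_wsqrtr; lra.
have s30 : 0 <= s3 by exact: sqrtr_ge0.
have s3l : 23 / 40 * sk <= s3.
  rewrite -(ler_pXn2r (_ : 0 < 2)%N) ?nnegrE //; last by apply: mulr_ge0 => //; lra.
  rewrite /s3 sqr_sqrtr; last by lra.
  rewrite exprMn /sk sqr_sqrtr //. rewrite expr2. lra.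
have Xpos : 0 < ell * tt + 2 * (tt - 1) * Lmax * sk.
  have A : 0 < ell * tt by apply: mulr_gt0 => //; lra.
  have B : 0 <= 2 * (tt - 1) * Lmax * sk.
    apply: mulr_ge0; last lra. apply: mulr_ge0 => //; apply: mulr_ge0; lra.
  lra.
have step : gam * (ell * tt + 2 * (tt - 1) * Lmax * sk) <= 1.
  by have := ler_wpM2r (ltW Xpos) Hstep; rewrite mulVf ?lt0r_neq0.
have hm : gam * Lmax * (tau%:R - 1) <= 1 / 2.
  rewrite -/tt.
  have a0 : 0 <= gam * Lmax * (tt - 1) by apply: mulr_ge0; [apply: mulr_ge0 => //; exact: ltW | lra].
  have := ler_wpM2l a0 sk1. rewrite mulr1 => h.
  have : 0 <= gam * (ell * tt) by apply: mulr_ge0; [exact: ltW | apply: mulr_ge0; lra].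
  move: step h. rewrite mulrDr. 
  have -> : gam * (2 * (tt - 1) * Lmax * sk) = 2 * (gam * Lmax * (tt - 1) * sk) by ring.
  lra.
set rate := 1 - gam * tau%:R * mu * zeta.
have round : forall (x : joint R d) p,
    jnorm2 (jsub (fun i => local_iter G (fun _ => gam) tau p x i tau) xs) <= rate * jnorm2 (jsub x xs).
  move=> x p.
  have := @round_bound R n d f G L xs tau gam Lmax Hg Hc Hsm tau1 gam0 HLm Lm0 hm x p
    _ _ _ _ _ erefl erefl erefl erefl erefl.
  move=> H; apply: le_trans H _.
  apply: (@scalar_main R gam tt ell mu Lmax sk s3) => //.
  - by apply: sumr_ge0 => i _; exact: vdot_ge0.
  - by have := Hsco x; rewrite mulrC ler_pdivrMr // mulrC.
  - by apply: sumr_ge0 => i _; exact: vdot_ge0.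
  - have TE : Tsum R tau = tt * (tt - 1) / 2.
      by rewrite -Tsum_eq mulfK // pnatr_eq0.
    by rewrite TE /rho.
have rate0 : 0 <= rate.
  rewrite /rate /zeta -/tt -/s3.
  set p := gam * ell * tt.
  set m := gam * Lmax * (tt - 1).
  have p0 : 0 <= p by rewrite /p; apply: mulr_ge0; [apply: mulr_ge0; [exact: ltW | exact: ltW] | lra].
  have m0 : 0 <= m by rewrite /m; apply: mulr_ge0; [apply: mulr_ge0 => //; exact: ltW | lra].
  have pm : p + 2 * (m * sk) <= 1.
    move: step; rewrite /p /m.
    have -> : gam * (ell * tt + 2 * (tt - 1) * Lmax * sk) = gam * ell * tt + 2 * (gam * Lmax * (tt - 1) * sk) by ring.
    done.
  have ms : m * s3 <= m * sk by apply: ler_wpM2l.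
  have ms0 : 0 <= m * s3 by apply: mulr_ge0.
  have ez : 2 * (tt - 1) * gam * Lmax * s3 = 2 * (m * s3) by rewrite /m; ring.
  rewrite ez.
  set z := 2 - p - 2 * (m * s3).
  have z0 : 0 <= z by rewrite /z; lra.
  have zp : z <= 2 - p by rewrite /z; lra.
  have h1 : gam * tt * mu * z <= gam * tt * ell * z.
    apply: ler_wpM2r => //; apply: ler_wpM2l => //; apply: mulr_ge0; [exact: ltW | lra].
  have h2 : gam * tt * ell * z = p * z by rewrite /p; ring.
  have h3 : p * z <= p * (2 - p) by apply: ler_wpM2l.
  have h4 : p * (2 - p) <= 1 by have := sqr_ge0 (p - 1); rewrite expr2; nra.
  lra.
have iter : forall p, jnorm2 (jsub (sync_iter G (fun _ => gam) tau x0 p) xs)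
    <= rate ^+ p * jnorm2 (jsub x0 xs).
  elim=> [|p IH]; first by rewrite expr0 mul1r.
  apply: le_trans (round (sync_iter G (fun _ => gam) tau x0 p) p) _.
  rewrite exprS -mulrA; exact: ler_wpM2l.
rewrite /pearl_iter mulKn // modnMr.
exact: iter Rr.
Qed.
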